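(* Let $X\colon\mathcal{I}\to\mathcal{T}op$ be an $\mathcal{I}$-space. For each finite group $G$ let $E_GX\colon\mathcal{I}_G\to\mathcal{T}op_G$ be the left Kan extension of $X$ (regarded as a functor with trivial $G$-actions) along $\iota\colon\mathcal{I}\to\mathcal{I}_G$. Then the functors $E_GX$ are the components of an $\mathcal{I}_\mathcal{G}$-space.
   Context: Let $\mathcal{G}$ be the category of finite groups. For finite $G$, $\mathcal{I}_G$ has objects $(\mathbb{R}^n,\rho)$ with $\rho\colon G\to O(n)$ a homomorphism and morphisms all linear isometric isomorphisms, with disjoint basepoint and conjugation $G$-action; $\mathcal{T}op_G$ is based $G$-spaces and all based maps with conjugation action. $\mathcal{I}=\mathcal{I}_e$ (objects $\mathbb{R}^n$), and $\iota\colon\mathcal{I}\to\mathcal{I}_G$ gives $\mathbb{R}^n$ the trivial action. Explicitly $E_GX(V)=\coprod_n\mathcal{I}_G(\mathbb{R}^n,V)\times X(\mathbb{R}^n)/\sim$, $[st,x]\sim[s,t_*x]$ for $t$ in $\mathcal{I}$, with diagonal $G$-action. An $\mathcal{I}_\mathcal{G}$-space $A$ consists of $G$-continuous functors $A_G\colon\mathcal{I}_G\to\mathcal{T}op_G$ (i.e. $A_G(gfg^{-1})=gA_G(f)g^{-1}$) for every finite $G$, with, for each homomorphism $\alpha\colon G\to H$, a natural isomorphism $\phi_\alpha\colon\alpha^*\circ A_H\Rightarrow A_G\circ\alpha^*$ with $G$-equivariant components (here $\alpha^*$ is restriction along $\alpha$ of representations and of group actions), such that $\phi_{\mathrm{id}}=\mathrm{id}$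 and the $\phi$'s are compatible with composition of homomorphisms. *)

(* Defs.v *)
From HB Require Import structures.
From mathcomp Require Import all_boot all_algebra all_fingroup.
From mathcomp Require Import generic_quotient.
From mathcomp Require Import boolp classical_sets reals topology.
From Stdlib Require Import Relations.Relation_Operators.
Set Implicit Arguments.
Unset Strict Implicit.
Unset Printing Implicit Defensive.
Import GRing.Theory numFieldTopology.Exports.
Local Open Scope classical_set_scope.
Local Open Scope ring_scope.
Local Open Scope quotient_scope.

Section Defs.
Variable R : realType.

(* I_G(R^n, R^m): linear isometric isomorphisms R^n -> R^m, i.e. the
   m x n real matrices M (acting on column vectors) with M^T M = 1 and
   M M^T = 1; topologized as a subspace of the matrices. *)
Definition isom_set (m n : nat) : set 'M[R]_(m, n) :=
  [set M | M^T *m M = 1%:M /\ M *m M^T = 1%:M].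

Arguments isom_set : clear implicits.
Definition IHom (m n : nat) : Type := set_type (isom_set m n).
HB.instance Definition _ m n := Topological.copy (IHom m n) (isom_set m n : topologicalType).

Lemma isom_set_mul m n k (f : IHom m n) (g : IHom n k) :
  (val f *m val g) \in isom_set m k.
Proof.
case: f g => [f /set_mem [f1 f2]] [g /set_mem [g1 g2]] /=.
apply/mem_set; split.
- by rewrite trmx_mul mulmxA -(mulmxA _ f^T) f1 mulmx1 g1.
- by rewrite trmx_mul mulmxA -(mulmxA f) g2 mulmx1 f2.
Qed.

Lemma isom_set_id n : (1%:M : 'M[R]_n) \in isom_set n n.
Proof. by apply/mem_set; split; rewrite trmx1 mulmx1. Qed.

Definition hcomp m n k (f : IHom m n) (g : IHom n k) : IHom m k :=
  exist (fun M => M \in isom_set m k) _ (isom_set_mul f g).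
Definition hid n : IHom n n := exist (fun M => M \in isom_set n n) _ (isom_set_id n).

(* An I-space: a continuous functor X from I (objects R^n, morphisms the
   linear isometric isomorphisms, i.e. the groups O(n)) to based spaces. *)
Record Ispace := {
  Xsp : nat -> topologicalType;
  Xpt : forall n, Xsp n;
  Xmap : forall n, IHom n n -> Xsp n -> Xsp n
}.

Definition is_Ispace (X : Ispace) : Prop :=
  [/\ forall n (x : Xsp X n), Xmap (hid n) x = x,
      forall n (s t : IHom n n) (x : Xsp X n),
        Xmap (hcomp s t) x = Xmap s (Xmap t x),
      forall n (t : IHom n n), Xmap t (Xpt X n) = Xpt X n &
      forall n, continuous (fun p : IHom n n * Xsp X n => Xmap p.1 p.2)].

Definition is_rep (gT : finGroupType) n (rho : gT -> IHom n n) : Prop :=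
  forall g h : gT, val (rho (g * h)%g) = val (rho g) *m val (rho h).

(* Objects of I_G are pairs (n, rho) with rho a
   representation; A gives for each finite group gT and object (n,rho) a
   based gT-space (carrier A gT n rho, basepoint pt, action act), and
   map gives the functor on morphisms I_G((n,rho),(m,sigma)) = IHom m n.
   phi gives the natural isomorphisms phi_alpha : alpha^* A_H => A_G alpha^*
   (alpha^* (n,rho) = (n, rho o alpha), alpha^* f = f). *)
Definition is_IGspace
  (A : forall (gT : finGroupType) n, (gT -> IHom n n) -> topologicalType)
  (pt : forall (gT : finGroupType) n (rho : gT -> IHom n n), A gT n rho)
  (act : forall (gT : finGroupType) n (rho : gT -> IHom n n), gT -> A gT n rho -> A gT n rho)
  (map : forall (gT : finGroupType) n (rho : gT -> IHom n n) m (sigma : gT -> IHom m m),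
           IHom m n -> A gT n rho -> A gT m sigma)
  (phi : forall (gT hT : finGroupType) (alpha : gT -> hT) n (rho : hT -> IHom n n),
           A hT n rho -> A gT n (fun g => rho (alpha g))) : Prop :=
  (forall (gT : finGroupType) n (rho : gT -> IHom n n), is_rep rho ->
     [/\ forall g : gT, continuous (act gT n rho g),
         forall g : gT, act gT n rho g (pt gT n rho) = pt gT n rho,
         forall x, act gT n rho 1%g x = x &
         forall (g h : gT) x,
           act gT n rho (g * h)%g x = act gT n rho g (act gT n rho h x)]) /\
  (forall (gT : finGroupType) n (rho : gT -> IHom n n), is_rep rho ->
     [/\ forall x, map gT n rho n rho (hid n) x = x,
         forall m (sigma : gT -> IHom m m) (f : IHom m n),
           is_rep sigma -> map gT n rho m sigma f (pt gT n rho) = pt gT m sigma,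
         forall m (sigma : gT -> IHom m m), is_rep sigma ->
           continuous (fun p : IHom m n * A gT n rho => map gT n rho m sigma p.1 p.2) &
         forall m (sigma : gT -> IHom m m) k (tau : gT -> IHom k k)
                (f : IHom k m) (f' : IHom m n) x,
           is_rep sigma -> is_rep tau ->
           map gT n rho k tau (hcomp f f') x =
           map gT m sigma k tau f (map gT n rho m sigma f' x)]) /\
  (forall (gT : finGroupType) n (rho : gT -> IHom n n) m (sigma : gT -> IHom m m)
          (f : IHom m n) (g : gT) x,
     is_rep rho -> is_rep sigma ->
     map gT n rho m sigma (hcomp (sigma g) (hcomp f (rho g^-1%g))) x =
     act gT m sigma g (map gT n rho m sigma f (act gT n rho g^-1%g x))) /\
  (forall (gT hT : finGroupType) (alpha : gT -> hT),
     {morph alpha : x y / (x * y)%g} ->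
     forall n (rho : hT -> IHom n n), is_rep rho ->
     [/\ (* isomorphism in Top_G: based homeomorphism *)
         continuous (phi gT hT alpha n rho),
         phi gT hT alpha n rho (pt hT n rho) = pt gT n (fun g => rho (alpha g)),
         (exists psi : A gT n (fun g => rho (alpha g)) -> A hT n rho,
            [/\ continuous psi, cancel (phi gT hT alpha n rho) psi &
                cancel psi (phi gT hT alpha n rho)]),
         (* G-equivariance, G acting on A_H(V) through alpha *)
         forall (g : gT) x,
           phi gT hT alpha n rho (act hT n rho (alpha g) x) =
           act gT n (fun g => rho (alpha g)) g (phi gT hT alpha n rho x) &
         forall m (sigma : hT -> IHom m m) (f : IHom m n) x, is_rep sigma ->
           phi gT hT alpha m sigma (map hT n rho m sigma f x) =
           map gT n (fun g => rho (alpha g)) m (fun g => sigma (alpha g)) f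
               (phi gT hT alpha n rho x)]) /\
  (forall (gT : finGroupType) n (rho : gT -> IHom n n) x, is_rep rho ->
     phi gT gT (fun g => g) n rho x = x) /\
  (forall (gT hT kT : finGroupType) (alpha : gT -> hT) (beta : hT -> kT),
     {morph alpha : x y / (x * y)%g} -> {morph beta : x y / (x * y)%g} ->
     forall n (rho : kT -> IHom n n) x, is_rep rho ->
       phi gT kT (fun g => beta (alpha g)) n rho x =
       phi gT hT alpha n (fun h => rho (beta h)) (phi hT kT beta n rho x)).

(* The left Kan extension E_G X along iota : I -> I_G, explicitly:
   E_G X(V) = (coprod_n I_G(R^n, V) x X(R^n)) / ~ ,  [s t, x] ~ [s, t_* x]. *)
Section Kan.
Variable X : Ispace.

Definition Epre (m : nat) : topologicalType := {n : nat & (IHom m n * Xsp X n)%type}.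

Definition Erel m (a b : Epre m) : Prop :=
  exists n (s : IHom m n) (t : IHom n n) (x : Xsp X n),
    a = existT _ n (hcomp s t, x) /\ b = existT _ n (s, Xmap t x).

Definition Eeq m (a b : Epre m) : bool := `[< clos_refl_sym_trans _ (@Erel m) a b >].

Lemma Eeq_refl m : reflexive (@Eeq m).
Proof. by move=> a; apply/asboolP; exact: rst_refl. Qed.
Lemma Eeq_sym m : symmetric (@Eeq m).
Proof.
move=> a b; apply/idP/idP => /asboolP H; apply/asboolP; exact: rst_sym.
Qed.
Lemma Eeq_trans m : transitive (@Eeq m).
Proof.
move=> b a c /asboolP H1 /asboolP H2; apply/asboolP; exact: rst_trans H1 H2.
Qed.

Definition Eequiv m := EquivRel (@Eeq m) (@Eeq_refl m) (@Eeq_sym m) (@Eeq_trans m).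

Definition EGX (m : nat) : Type := {eq_quot (Eequiv m)}.
HB.instance Definition _ m := Quotient.on (EGX m).
HB.instance Definition _ m := Topological.copy (EGX m) (quotient_topology (EGX m)).

Definition EGpt m : EGX m := \pi_(EGX m) (existT _ m (hid m, Xpt X m)).

Definition EGmap m m' (f : IHom m' m) (q : EGX m) : EGX m' :=
  let: existT n (s, x) := repr q in \pi_(EGX m') (existT _ n (hcomp f s, x)).

Definition EGact (gT : finGroupType) m (rho : gT -> IHom m m) (g : gT) : EGX m -> EGX m :=
  EGmap (rho g).
End Kan.
End Defs.

(* Main.v *)
Require Import Defs.
From HB Require Import structures.
From mathcomp Require Import all_boot all_algebra all_fingroup generic_quotient.
From mathcomp Require Import boolp classical_sets reals topology unstable.
From Stdlib Require Import Relations.Relation_Operators.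
Set Implicit Arguments.
Unset Strict Implicit.
Unset Printing Implicit Defensive.
Import GRing.Theory.
Local Open Scope ring_scope.
Local Open Scope quotient_scope.

Section Aux.
Variable R : realType.

Lemma IHom_eq m n (f g : IHom R m n) : val f = val g -> f = g.
Proof.
case: f g => [f Hf] [g Hg] /= E; subst g; congr exist; exact: Prop_irrelevance.
Qed.

Lemma hcompA m n k l (f : IHom R m n) (g : IHom R n k) (h : IHom R k l) :
  hcomp f (hcomp g h) = hcomp (hcomp f g) h.
Proof. by apply: IHom_eq => /=; rewrite mulmxA. Qed.

Lemma hcomp1h m n (f : IHom R m n) : hcomp (hid R m) f = f.
Proof. by apply: IHom_eq => /=; rewrite mul1mx. Qed.

Lemma hcomph1 m n (f : IHom R m n) : hcomp f (hid R n) = f.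
Proof. by apply: IHom_eq => /=; rewrite mulmx1. Qed.

Lemma IHom_dim m n (f : IHom R m n) : m = n.
Proof.
case: f => [M /set_mem [H1 H2]].
apply/eqP; rewrite eqn_leq; apply/andP; split.
- have := mxrankM_maxl M M^T; rewrite H2 mxrank1 => h.
  exact: leq_trans h (rank_leq_col M).
- have := mxrankM_maxl M^T M; rewrite H1 mxrank1 => h.
  exact: leq_trans h (rank_leq_col M^T).
Qed.

Lemma rep1 (gT : finGroupType) n (rho : gT -> IHom R n n) :
  is_rep rho -> rho 1%g = hid R n.
Proof.
move=> hr; apply: IHom_eq => /=.
have E := hr 1%g 1%g; rewrite mulg1 in E.
case: (rho 1%g) E => [M /set_mem [H1 H2]] /= E.
by rewrite -[LHS]mul1mx -H1 -mulmxA -E H1.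
Qed.
End Aux.
Section Q.
Variable R : realType.
Variable X : Ispace R.
Hypothesis HX : is_Ispace X.

Definition shift m m' (f : IHom R m' m) (a : Epre X m) : Epre X m' :=
  let: existT n (s, x) := a in existT _ n (hcomp f s, x).

Lemma Eeq_shift m m' (f : IHom R m' m) a b :
  Eeq a b -> Eeq (shift f a) (shift f b).
Proof.
move=> /asboolP H; apply/asboolP; elim: H => {a b}.
- move=> a b [n [s [t [x [-> ->]]]]]; apply: rst_step.
  by exists n, (hcomp f s), t, x; rewrite /= hcompA.
- by move=> a; apply: rst_refl.
- by move=> a b _ H; apply: rst_sym.
- by move=> a b c _ H1 _ H2; apply: rst_trans H1 H2.
Qed.

Lemma piEq m (a b : Epre X m) : Eeq a b -> \pi_(EGX X m) a = \pi_(EGX X m) b.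
Proof. by move=> H; apply/eqmodP. Qed.

Lemma piEq' m (a b : Epre X m) : \pi_(EGX X m) a = \pi_(EGX X m) b -> Eeq a b.
Proof. by move/eqmodP. Qed.

Lemma EGmap_pi m m' (f : IHom R m' m) a :
  EGmap f (\pi_(EGX X m) a) = \pi_(EGX X m') (shift f a).
Proof.
rewrite /EGmap.
have : Eeq (repr (\pi_(EGX X m) a)) a by apply: piEq'; rewrite reprK.
case: (repr _) => k [s x] /(Eeq_shift f) H.
exact: piEq.
Qed.

Lemma EGmapM m n k (f : IHom R k m) (g : IHom R m n) q :
  EGmap (X:=X) (hcomp f g) q = EGmap f (EGmap g q).
Proof.
elim/quotW: q => -[j [s x]].
by rewrite !EGmap_pi /= hcompA.
Qed.

Lemma EGmap1 n q : EGmap (X:=X) (hid R n) q = q.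
Proof. by elim/quotW: q => -[j [s x]]; rewrite EGmap_pi /= hcomp1h. Qed.

Lemma pi_norm m (s : IHom R m m) x :
  \pi_(EGX X m) (existT _ m (s, x)) = \pi_(EGX X m) (existT _ m (hid R m, Xmap s x)).
Proof.
apply: piEq; apply/asboolP; apply: rst_step.
by exists m, (hid R m), s, x; rewrite hcomp1h.
Qed.

Lemma EGmap_pt m n (f : IHom R m n) : EGmap f (EGpt X n) = EGpt X m.
Proof.
have e := IHom_dim f; subst n.
rewrite /EGpt EGmap_pi /= pi_norm.
by case: HX => _ _ -> _.
Qed.
End Q.
Lemma pair_cont (A B : topologicalType) (a : A) (x : B) : {for x, continuous (fun y : B => (a, y))}.
Proof.
rewrite /prop_for /continuous_at.
apply: (@cvg_pair _ _ _ _ _ _ _ _ _ (fun _ => a) id).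
- exact: cvg_cst.
- exact: cvg_id.
Qed.

Section C.
Variable R : realType.
Variable X : Ispace R.
Hypothesis HX : is_Ispace X.

Definition rk m k (p : (IHom R m k * Xsp X k)%type) : Xsp X m :=
  (match IHom_dim p.1 in _ = k' return IHom R m k' -> Xsp X k' -> Xsp X m with
   | erefl => fun s x => Xmap s x end) p.1 p.2.

Lemma rkE m (p : (IHom R m m * Xsp X m)%type) : rk p = Xmap p.1 p.2.
Proof. by rewrite /rk; move: (IHom_dim _) => e; rewrite (eq_irrelevance e erefl). Qed.

Definition rpre m (a : Epre X m) : Xsp X m := sigT_fun (@rk m) a.

Lemma rk_cont m k : continuous (@rk m k).
Proof.
have [e|ne] := eqVneq m k.
- subst k; have -> : @rk m m = fun p => Xmap p.1 p.2 by apply: funext => p; exact: rkE.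
  by case: HX.
- by move=> p; exfalso; move/eqP: ne; apply; exact: IHom_dim p.1.
Qed.

Lemma rpre_cont m : continuous (@rpre m).
Proof. by apply: sigT_continuous => k; exact: rk_cont. Qed.

Lemma rpre_inv m (a b : Epre X m) : Eeq a b -> rpre a = rpre b.
Proof.
move=> /asboolP; elim => {a b}.
- move=> a b [n [s [t [x [-> ->]]]]].
  have e := IHom_dim s; subst n.
  rewrite /rpre /sigT_fun /= !rkE /=.
  by case: HX => _ -> _ _.
- by [].
- by move=> a b _ ->.
- by move=> a b c _ -> _ ->.
Qed.

Definition r m (q : EGX X m) : Xsp X m := rpre (repr q).

Lemma r_cont m : continuous (@r m).
Proof.
have hom : forall a b : Epre X m, \pi_(EGX X m) a == \pi_(EGX X m) b -> rpre a == rpre b.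
  move=> a b /eqP H; apply/eqP; apply: rpre_inv; exact: piEq'.
have H := @repr_comp_continuous _ (EGX X m) _ (@rpre m) (@rpre_cont m).
exact: (H hom).
Qed.

Definition j m (x : Xsp X m) : EGX X m := \pi_(EGX X m) (existT _ m (hid R m, x)).

Lemma j_cont m : continuous (@j m).
Proof.
move=> x.
have c1 : {for x, continuous (fun x : Xsp X m => (hid R m, x))}.
  exact: pair_cont.
have c2 : {for (hid R m, x), continuous (existT (fun k => (IHom R m k * Xsp X k)%type) m)}.
  exact: existT_continuous.
have c3 := @pi_continuous _ (EGX X m) (existT (fun k => (IHom R m k * Xsp X k)%type) m (hid R m, x)).
exact: (continuous_comp (continuous_comp c1 c2) c3).
Qed.

Lemma EGmap_jr m (f : IHom R m m) q : EGmap f q = j (Xmap f (r q)).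
Proof.
elim/quotW: q => a.
rewrite EGmap_pi /r.
have -> : rpre (repr (\pi_(EGX X m) a)) = rpre a.
  by apply: rpre_inv; apply: piEq'; rewrite reprK.
case: a => k [s x]; have e := IHom_dim s; subst k.
rewrite /= pi_norm /j /rpre /sigT_fun /= rkE /=.
by case: HX => _ -> _ _.
Qed.

Lemma EGmap_cont m n : continuous (fun p : IHom R m n * EGX X n => EGmap p.1 p.2).
Proof.
have [e|ne] := eqVneq m n; last first.
  by move=> p; exfalso; move/eqP: ne; apply; exact: IHom_dim p.1.
subst n.
have -> : (fun p : IHom R m m * EGX X m => EGmap p.1 p.2) =
          (fun p => j (Xmap p.1 (r p.2))).
  by apply: funext => p; exact: EGmap_jr.
move=> p.
apply: (@continuous_comp _ _ _ (fun p : IHom R m m * EGX X m => Xmap p.1 (r p.2)) (@j m)); last exact: j_cont.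
apply: (@continuous2_cvg _ _ _ _ _ _ fst (fun p => r p.2) (@Xmap R X m)).
- by case: HX => _ _ _ /(_ m (p.1, r p.2)).
- exact: cvg_fst.
- apply: (@continuous_comp _ _ _ snd (@r m)); first exact: cvg_snd.
  exact: r_cont.
Qed.

Lemma EGmap_cont1 m n (f : IHom R m n) : continuous (EGmap (X:=X) f).
Proof.
move=> q.
apply: (@continuous_comp _ _ _ (fun q => (f, q)) (fun p : IHom R m n * EGX X n => EGmap p.1 p.2)); last exact: EGmap_cont.
exact: pair_cont.
Qed.
End C.

Theorem propositionB3 (R : realType) (X : Ispace R) :
  is_Ispace X ->
  exists phi : forall (gT hT : finGroupType) (alpha : gT -> hT) n
                      (rho : hT -> IHom R n n), EGX X n -> EGX X n,
    @is_IGspace R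
      (fun (gT : finGroupType) n (rho : gT -> IHom R n n) => (EGX X n : topologicalType))
      (fun (gT : finGroupType) n (rho : gT -> IHom R n n) => @EGpt R X n)
      (fun (gT : finGroupType) n (rho : gT -> IHom R n n) (g : gT) =>
         @EGact R X gT n rho g)
      (fun (gT : finGroupType) n (rho : gT -> IHom R n n) m
           (sigma : gT -> IHom R m m) (f : IHom R m n) => @EGmap R X n m f)
      phi.
Proof.
move=> HX; exists (fun _ _ _ _ _ x => x).
split; [|split; [|split; [|split; [|split]]]].
- move=> gT n rho hr; split.
  + move=> g; exact: EGmap_cont1.
  + move=> g; exact: EGmap_pt.
  + by move=> x; rewrite /EGact (rep1 hr) EGmap1.
  + move=> g h x; rewrite /EGact -EGmapM; congr EGmap; apply: IHom_eq; exact: hr.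
- move=> gT n rho hr; split.
  + exact: EGmap1.
  + move=> m sigma f _; exact: EGmap_pt.
  + move=> m sigma _; exact: EGmap_cont.
  + by move=> *; rewrite EGmapM.
- by move=> *; rewrite /EGact !EGmapM.
- move=> gT hT alpha _ n rho _; split.
  + by move=> x; exact: cvg_id.
  + reflexivity.
  + exists id; split; [by move=> x; exact: cvg_id| by move=> x | by move=> x].
  + by move=> g x.
  + by move=> m sigma f x _.
- by move=> gT n rho x _.
- by move=> *.
Qed.
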